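(* Let $n\ge0$ and let $\mathcal V$ be a variety with $n+2$ Gumm terms. (i) For every $q\ge1$, $\mathcal V$ is $(2^q+1,\,(2^{q+1}-2)n+2)$-modular. (ii) For every $q\ge2$, $\mathcal V$ is $(2^q-1,\,(2^{q+1}-2q-2)n+2)$-modular.
   Context: $\circ$ is relational composition, juxtaposition is intersection. For relations $X,Y$ and $m\ge1$, $X\circ_m Y$ denotes $X\circ Y\circ X\circ\cdots$ with $m$ factors. For $m\ge3$, a variety is $(m,k)$-modular if each of its algebras satisfies $\alpha(\beta\circ_m\alpha\gamma)\subseteq\alpha\beta\circ_k\alpha\gamma$ for all congruences $\alpha,\beta,\gamma$. A variety has $n+2$ Gumm terms if it has ternary terms $p,j_1,\dots,j_{n+1}$ satisfying: $x=j_i(x,y,x)$ for all $i$; $x=p(x,z,z)$; $p(x,x,z)=j_1(x,x,z)$; $j_i(x,z,z)=j_{i+1}(x,z,z)$ for odd $i\le n$; $j_i(x,x,z)=j_{i+1}(x,x,z)$ for even $i\le n$; $j_{n+1}(x,y,z)=z$. *)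

(* Defs.v *)
From mathcomp Require Import all_boot.
Set Implicit Arguments. Unset Strict Implicit. Unset Printing Implicit Defensive.

Record signature := Signature { op_sym : Type; arity : op_sym -> nat }.

Record algebra (S : signature) := Algebra {
  carrier :> Type;
  interp : forall f : op_sym S, ('I_(arity f) -> carrier) -> carrier }.

Inductive term (S : signature) (X : Type) : Type :=
| Var : X -> term S X
| App : forall f : op_sym S, ('I_(arity f) -> term S X) -> term S X.

Fixpoint eval (S : signature) (X : Type) (A : algebra S) (e : X -> A)
  (t : term S X) : A :=
  match t with
  | Var x => e x
  | App f ts => @interp S A f (fun i => eval e (ts i))
  end.

(* A variety = the class of all models of a set E of identities
   (Birkhoff: equivalently, an HSP-closed class). Identities use
   variables from nat. *)
Definition in_variety (S : signature) (E : term S nat -> term S nat -> Prop)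
  (A : algebra S) : Prop :=
  forall s t, E s t -> forall e : nat -> A, eval e s = eval e t.

Definition rel_comp (T : Type) (X Y : T -> T -> Prop) : T -> T -> Prop :=
  fun a c => exists b, X a b /\ Y b c.
Definition rel_meet (T : Type) (X Y : T -> T -> Prop) : T -> T -> Prop :=
  fun a b => X a b /\ Y a b.
Definition rel_sub (T : Type) (X Y : T -> T -> Prop) : Prop :=
  forall a b, X a b -> Y a b.

Fixpoint circ_m (T : Type) (m : nat) (X Y : T -> T -> Prop) : T -> T -> Prop :=
  match m with
  | 0 => fun a b => a = b
  | 1 => X
  | m'.+1 => rel_comp X (circ_m m' Y X)
  end.

Definition is_congruence (S : signature) (A : algebra S) (R : A -> A -> Prop) : Prop :=
  [/\ (forall a, R a a), (forall a b, R a b -> R b a),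
      (forall a b c, R a b -> R b c -> R a c) &
      (forall (f : op_sym S) (a b : 'I_(arity f) -> A),
          (forall i, R (a i) (b i)) -> R (@interp S A f a) (@interp S A f b))].

Definition modular (S : signature) (E : term S nat -> term S nat -> Prop)
  (m k : nat) : Prop :=
  forall A : algebra S, in_variety E A ->
  forall alpha beta gamma : A -> A -> Prop,
    is_congruence alpha -> is_congruence beta -> is_congruence gamma ->
    rel_sub (rel_meet alpha (circ_m m beta (rel_meet alpha gamma)))
            (circ_m k (rel_meet alpha beta) (rel_meet alpha gamma)).

Definition ev3 (S : signature) (A : algebra S) (t : term S 'I_3) (x y z : A) : A :=
  eval (fun i : 'I_3 => match val i with 0 => x | 1 => y | _ => z end) t.

Definition has_gumm_terms (S : signature) (E : term S nat -> term S nat -> Prop)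
  (n : nat) : Prop :=
  exists (p : term S 'I_3) (j : nat -> term S 'I_3),
  forall A : algebra S, in_variety E A ->
  (forall i, 1 <= i <= n.+1 -> forall x y : A, ev3 (j i) x y x = x) /\
      (forall x z : A, ev3 p x z z = x) /\
      (forall x z : A, ev3 p x x z = ev3 (j 1) x x z) /\
      (forall i, 1 <= i <= n -> odd i -> forall x z : A,
          ev3 (j i) x z z = ev3 (j i.+1) x z z) /\
      (forall i, 1 <= i <= n -> ~~ odd i -> forall x z : A,
          ev3 (j i) x x z = ev3 (j i.+1) x x z) /\
      (forall x y z : A, ev3 (j n.+1) x y z = z).

(* Main.v *)
Require Import Defs.
From mathcomp Require Import all_boot.
From mathcomp Require Import zify.
Set Implicit Arguments. Unset Strict Implicit. Unset Printing Implicit Defensive.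

Definition pat (T : Type) (X Y : T -> T -> Prop) (i : nat) := if odd i then Y else X.
Definition seqp (T : Type) (X Y : T -> T -> Prop) (k : nat) (a b : T) :=
  exists e : nat -> T, [/\ e 0 = a, e k = b & forall i, i < k -> pat X Y i (e i) (e i.+1)].

Lemma patS T (X Y : T -> T -> Prop) i : pat X Y i.+1 = pat Y X i.
Proof. by rewrite /pat /=; case: (odd i). Qed.

Lemma pat_par T (X Y : T -> T -> Prop) i j : odd i = odd j -> pat X Y i = pat X Y j.
Proof. by rewrite /pat => ->. Qed.

Lemma pat_shift T (X Y : T -> T -> Prop) d j :
  pat (pat X Y d) (pat X Y d.+1) j = pat X Y (j + d).
Proof. by rewrite /pat oddD /=; case: (odd j); case: (odd d). Qed.

Lemma circ_seq T k (X Y : T -> T -> Prop) a b : circ_m k X Y a b <-> seqp X Y k a b.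
Proof.
elim: k X Y a b => [|k IH] X Y a b.
  split => [-> | [e [<- <- _]]] //. by exists (fun _ => b); split.
have E : circ_m k.+1 X Y a b <-> rel_comp X (circ_m k Y X) a b.
  case: k IH => [|k] IH /=; last by split.
  split => [H|[b' [H <-]]] //. by exists b.
rewrite E; split.
- move=> [b' [H1 /IH [e [E0 Ek He]]]].
  exists (fun i => if i is i'.+1 then e i' else a); split => //.
  case=> [|i] Hi /=; first by rewrite /pat /= E0.
  rewrite patS; apply: He; exact Hi.
- move=> [e [E0 Ek He]]. exists (e 1); split.
    by rewrite -E0; exact: (He 0 (ltn0Sn _)).
  apply/IH; exists (fun i => e i.+1); split => // i Hi.
  rewrite -patS; exact: He.
Qed.

Definition symm T (R : T -> T -> Prop) := forall x y, R x y -> R y x.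

Lemma pat_symm T (X Y : T -> T -> Prop) i : symm X -> symm Y -> symm (pat X Y i).
Proof. by rewrite /pat; case: (odd i). Qed.

Lemma seqp_rev T (X Y : T -> T -> Prop) k a b : symm X -> symm Y -> seqp X Y k a b ->
  seqp (pat X Y k.+1) (pat X Y k) k b a.
Proof.
move=> HX HY [e [E0 Ek He]].
exists (fun i => e (k - i)); split; first by rewrite subn0.
  by rewrite subnn.
move=> i Hi.
have H := He (k - i.+1) ltac:(lia).
rewrite (_ : (k - i.+1).+1 = k - i) in H; last by lia.
have -> : pat (pat X Y k.+1) (pat X Y k) i = pat X Y (k - i.+1).
  rewrite /pat oddB //= ; by case: (odd i); case: (odd k).
exact: (pat_symm HX HY H).
Qed.

Lemma seqp_merge T (X Y : T -> T -> Prop) k1 k2 a b c : 0 < k1 -> 0 < k2 ->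
  (forall x y z, pat X Y k1.-1 x y -> pat X Y k1.-1 y z -> pat X Y k1.-1 x z) ->
  seqp X Y k1 a b -> seqp (pat X Y k1.-1) (pat X Y k1) k2 b c ->
  seqp X Y (k1 + k2 - 1) a c.
Proof.
move=> H1 H2 Htr [e [E0 Ek He]] [f [F0 Fk Hf]].
exists (fun i => if i < k1 then e i else f (i - k1.-1)); split.
- by rewrite H1.
- have -> : (k1 + k2 - 1 < k1) = false by lia.
  by have -> : k1 + k2 - 1 - k1.-1 = k2 by lia.
- move=> i Hi /=. case: (ltnP i.+1 k1) => Hik.
  + have -> : (i < k1) = true by lia.
    apply: He; lia.
  + case: (ltnP i k1) => Hik'.
    * have Ei : i = k1.-1 by lia.
      have -> : i.+1 - k1.-1 = 1 by lia.
      rewrite Ei. apply: (Htr _ b).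
      -- have H := He k1.-1 ltac:(lia). by rewrite prednK // Ek in H.
      -- have H := Hf 0 H2. by rewrite F0 /pat /= in H.
    * have -> : i.+1 - k1.-1 = (i - k1.-1).+1 by lia.
      have H := Hf (i - k1.-1) ltac:(lia). have E := pat_shift X Y k1.-1 (i - k1.-1).
      rewrite prednK // in E. rewrite E in H.
      by rewrite (_ : i - k1.-1 + k1.-1 = i) in H; last by lia.
Qed.

Lemma seqp_map (T U : Type) (X Y : T -> T -> Prop) (X' Y' : U -> U -> Prop) (f : T -> U) k a b :
  (forall x y, X x y -> X' (f x) (f y)) -> (forall x y, Y x y -> Y' (f x) (f y)) ->
  seqp X Y k a b -> seqp X' Y' k (f a) (f b).
Proof.
move=> HX HY [e [E0 Ek He]]; exists (fun i => f (e i)); split; try by congr f.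
move=> i /He; rewrite /pat; case: (odd i); auto.
Qed.

Lemma eval_compat S (A : algebra S) (R : A -> A -> Prop) (X : Type) (t : term S X)
  (e e' : X -> A) : is_congruence R -> (forall v, R (e v) (e' v)) -> R (eval e t) (eval e' t).
Proof.
move=> [Hr Hs Ht Hc] He. elim: t => [x|f ts IH] /=; first exact: He.
apply: Hc => i; exact: IH.
Qed.

Lemma ev3_compat S (A : algebra S) (R : A -> A -> Prop) t (x y z x' y' z' : A) :
  is_congruence R -> R x x' -> R y y' -> R z z' -> R (ev3 t x y z) (ev3 t x' y' z').
Proof. move=> HR Hx Hy Hz; apply: eval_compat => // -[[|[|k]] ?] //=. Qed.

Lemma cr S (A : algebra S) (R : A -> A -> Prop) : is_congruence R -> forall a, R a a.
Proof. by case. Qed.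
Lemma cs S (A : algebra S) (R : A -> A -> Prop) : is_congruence R -> symm R.
Proof. by case. Qed.
Lemma ct S (A : algebra S) (R : A -> A -> Prop) : is_congruence R ->
  forall a b c, R a b -> R b c -> R a c.
Proof. by case. Qed.

Lemma meet_cong S (A : algebra S) (R R' : A -> A -> Prop) :
  is_congruence R -> is_congruence R' -> is_congruence (rel_meet R R').
Proof.
move=> [r1 s1 t1 c1] [r2 s2 t2 c2]; split.
- by move=> a; split.
- by move=> a b [] ? ?; split; auto.
- by move=> a b c [] ? ? [] ? ?; split; eauto.
- move=> f a b H; split; [apply: c1|apply: c2] => i; case: (H i) => //.
Qed.

Lemma pat_cong S (A : algebra S) (X Y : A -> A -> Prop) i :
  is_congruence X -> is_congruence Y -> is_congruence (pat X Y i).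
Proof. by rewrite /pat; case: (odd i). Qed.

Section Main.
Variables (S : signature) (A : algebra S) (n : nat) (p : term S 'I_3) (j : nat -> term S 'I_3).
Hypothesis Hj : forall i, 1 <= i <= n.+1 -> forall x y : A, ev3 (j i) x y x = x.
Hypothesis Hp1 : forall x z : A, ev3 p x z z = x.
Hypothesis Hp2 : forall x z : A, ev3 p x x z = ev3 (j 1) x x z.
Hypothesis Hodd : forall i, 1 <= i <= n -> odd i -> forall x z : A,
  ev3 (j i) x z z = ev3 (j i.+1) x z z.
Hypothesis Hev : forall i, 1 <= i <= n -> ~~ odd i -> forall x z : A,
  ev3 (j i) x x z = ev3 (j i.+1) x x z.
Hypothesis Hlast : forall x y z : A, ev3 (j n.+1) x y z = z.
Variables (al be ga : A -> A -> Prop).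
Hypotheses (Hal : is_congruence al) (Hbe : is_congruence be) (Hga : is_congruence ga).

Let B := rel_meet al be.
Let G := rel_meet al ga.
Let HB : is_congruence B := meet_cong Hal Hbe.
Let HG : is_congruence G := meet_cong Hal Hga.

Definition Q m k := forall a c, al a c -> seqp be G m a c -> seqp B G k a c.

Lemma Q1 : Q 1 2.
Proof.
move=> a c Hac [e [E0 E1 He]].
have H := He 0 isT. rewrite /pat /= E0 E1 in H.
exists (fun i => if i is 0 then a else c); split => // -[|[|i]] // _ /=.
rewrite /pat /=. exact: (cr HG c).
Qed.

Lemma pat_val (X Y : A -> A -> Prop) i : pat X Y i = if odd i then Y else X.
Proof. by []. Qed.

Lemma jchain m a c : odd m -> al a c -> seqp be G m a c ->
  seqp B G (n * m.-1 + 1) (ev3 p a a c) c.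
Proof.
move=> Hm Hac Hpath.
pose s i := if odd i then ev3 (j i) a a c else ev3 (j i) a c c.
have step : forall i, 1 <= i <= n -> seqp B G m (s i) (s i.+1).
  move=> i Hi.
  pose f x := ev3 (j i) a x c.
  have fal : forall x, al (f x) a.
    move=> x. rewrite /f -[X in al _ X](Hj (i:=i) _ a x); last lia.
    exact: (ev3_compat _ Hal (cr Hal a) (cr Hal x) (cs Hal Hac)).
  have Hf : seqp B G m (f a) (f c).
    apply: seqp_map Hpath => x y H.
    + split; first exact: (ct Hal (fal x) (cs Hal (fal y))).
      exact: (ev3_compat _ Hbe (cr Hbe a) H (cr Hbe c)).
    + exact: (ev3_compat _ HG (cr HG a) H (cr HG c)).
  rewrite /s /=; case Hi2: (odd i) => /=.
  + by rewrite -Hodd.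
  + have := seqp_rev (cs HB) (cs HG) Hf.
    rewrite /pat /= Hm /= -Hev ?Hi2 //.
have chain : forall t, t <= n -> seqp B G (t * m.-1 + 1) (s (n.+1 - t)) c.
  elim=> [|t IH] Ht.
    rewrite subn0 /s. have -> : ev3 (j n.+1) a a c = c by [].
    have -> : ev3 (j n.+1) a c c = c by [].
    case: (odd n.+1); by exists (fun _ => c); split => // i; rewrite ltnS leqn0 => /eqP ->; rewrite /pat /=; exact: (cr HB c).
  have Hm0 : 0 < m by move: Hm; case: (m).
  have := seqp_merge (k1:=m) (k2:=t * m.-1 + 1) Hm0 ltac:(lia) _ (step (n - t) ltac:(lia)).
  have Hm1 : odd m.-1 = false by move: Hm; case: (m) => // m' /= /negPf.
  rewrite /pat Hm1 Hm /=.
  have -> : (n - t).+1 = n.+1 - t by lia.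
  move=> H; have {H} := H c (ct HB) (IH ltac:(lia)).
  have -> : m + (t * m.-1 + 1) - 1 = t.+1 * m.-1 + 1.
    rewrite mulSn. rewrite -{1}(prednK Hm0). lia.
  by have -> : n.+1 - t.+1 = n - t by lia.
have := chain n (leqnn n).
by rewrite subSnn /s /= -Hp2.
Qed.

Lemma cons m h k a c : odd m -> odd h -> h < m -> m <= h.*2.+1 -> ~~ odd k -> 0 < k ->
  Q h k -> al a c -> seqp be G m a c -> seqp G B (k + n * m.-1) a c.
Proof.
move=> Hm Hh Hhm Hmh Hk Hk0 HQ Hac Hpath.
have Hpath' := Hpath.
case: Hpath' => e [E0 Em He].
pose x := ev3 p a (e h) (e h.+1).
have Geh : G (e h) (e h.+1) by have := He h Hhm; rewrite /pat Hh.
have HGax : G a x.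
  rewrite -[X in G X _](Hp1 a (e h)).
  exact: (ev3_compat _ HG (cr HG a) (cr HG (e h)) Geh).
pose y := ev3 p a a c.
have Hd : seqp be G h x y.
  exists (fun s => ev3 p a (e (h - s)) (e (minn (h.+1 + s) m))); split.
  - by rewrite subn0 addn0 (_ : minn h.+1 m = h.+1) //; lia.
  - rewrite subnn E0 (_ : minn (h.+1 + h) m = m); last by lia.
    by rewrite Em.
  - move=> s Hs.
    have HR := @pat_cong _ _ be G s Hbe HG.
    apply: (ev3_compat _ HR (cr HR a)).
    + have H := He (h - s.+1) ltac:(lia).
      rewrite (_ : (h - s.+1).+1 = h - s) in H; last by lia.
      rewrite (@pat_par _ be G (h - s.+1) s) in H.
      * exact: (cs HR H).
      * rewrite oddB // Hh /=. by case: (odd s).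
    + case: (ltnP (h.+1 + s) m) => Hlt.
      * rewrite (_ : minn (h.+1 + s.+1) m = (h.+1 + s).+1); last by lia.
        have H := He (h.+1 + s) Hlt.
        rewrite (@pat_par _ be G (h.+1 + s) s) in H => //.
        by rewrite oddD /= Hh.
      * rewrite (_ : minn (h.+1 + s.+1) m = m); last by lia.
        exact: (cr HR).
have Hxa : al x a by apply: (cs Hal); case: HGax.
have Hya : al y a.
  rewrite /y Hp2 -[X in al _ X](Hj (i:=1) _ a a); last lia.
  exact: (ev3_compat _ Hal (cr Hal a) (cr Hal a) (cs Hal Hac)).
have Hyx : al y x by apply: (ct Hal Hya (cs Hal Hxa)).
have Hdr : seqp be G h y x.
  have := seqp_rev (cs Hbe) (cs HG) Hd. by rewrite /pat /= Hh.
have Hq := HQ y x Hyx Hdr.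
have Hq' : seqp G B k x y.
  have := seqp_rev (cs HB) (cs HG) Hq. by rewrite /pat /= (negPf Hk).
have H1 : seqp G B k a y.
  have H0 : seqp G B 1 a x.
    by exists (fun i => if i is 0 then a else x); split => // -[|i] //.
  have := seqp_merge (k1:=1) (k2:=k) (X:=G) (Y:=B) isT Hk0 (ct HG) H0 Hq'.
  by rewrite add1n subn1.
have Hj' := jchain Hm Hac Hpath.
have Hk1 : odd k.-1 by move: Hk Hk0; case: (k) => //= k'; rewrite negbK.
have := seqp_merge (k1:=k) (k2:=n*m.-1+1) (X:=G) (Y:=B) (c:=c) Hk0 ltac:(lia).
rewrite /pat Hk1 (negPf Hk) => H; have {H} := H a y (ct HB) H1 Hj'.
by rewrite (_ : k + (n * m.-1 + 1) - 1 = k + n * m.-1); last lia.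
Qed.

Lemma Qstep m h k : odd m -> odd h -> h < m -> m <= h.*2.+1 -> ~~ odd k -> 0 < k ->
  Q h k -> Q m (k + n * m.-1).
Proof.
move=> Hm Hh Hhm Hmh Hk Hk0 HQ a c Hac Hpath.
have Hr : seqp be G m c a.
  by have := seqp_rev (cs Hbe) (cs HG) Hpath; rewrite /pat /= Hm.
have H := cons Hm Hh Hhm Hmh Hk Hk0 HQ (cs Hal Hac) Hr.
have := seqp_rev (cs HG) (cs HB) H.
have Hm1 : odd m.-1 = false by move: Hm; case: (m) => // m' /= /negPf.
by rewrite /pat /= oddD oddM Hm1 andbF addbF (negPf Hk).
Qed.

Lemma Qeq m k k' : k = k' -> Q m k -> Q m k'.
Proof. by move=> ->. Qed.

Lemma partI q : Q (2 ^ q.+1 + 1) ((2 ^ q.+2 - 2) * n + 2).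
Proof.
elim: q => [|q IH].
  apply: Qeq (Qstep (m:=3) (h:=1) (k:=2) isT isT isT isT isT isT Q1).
  rewrite /=; lia.
have HX : 2 <= 2 ^ q.+1 by rewrite expnS; have := expn_gt0 2 q; lia.
apply: Qeq (Qstep (m:=2 ^ q.+2 + 1) (h:=2 ^ q.+1 + 1) _ _ _ _ _ _ IH).
- rewrite !expnS; nia.
- by rewrite oddD oddX.
- by rewrite oddD oddX.
- rewrite (expnS 2 q.+1); lia.
- rewrite -muln2 (expnS 2 q.+1); lia.
- rewrite (_ : (2 ^ q.+2 - 2) * n + 2 = ((2 ^ q.+1 - 1) * n + 1).*2) ?odd_double //.
  rewrite (expnS 2 q.+1) -muln2; nia.
- by rewrite addn2.
Qed.

Lemma partII q : Q (2 ^ q.+2 - 1) ((2 ^ q.+3 - 2 * q.+2 - 2) * n + 2).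
Proof.
elim: q => [|q IH].
  apply: Qeq (Qstep (m:=3) (h:=1) (k:=2) isT isT isT isT isT isT Q1).
  rewrite /=; lia.
have Hq := ltn_expl q (ltnSn 1).
have HX : 2 <= 2 ^ q.+1 by rewrite expnS; have := expn_gt0 2 q; lia.
apply: Qeq (Qstep (m:=2 ^ q.+3 - 1) (h:=2 ^ q.+2 - 1) _ _ _ _ _ _ IH).
- rewrite !expnS; nia.
- rewrite oddB ?oddX //. by rewrite expn_gt0.
- rewrite oddB ?oddX //. by rewrite expn_gt0.
- rewrite (expnS 2 q.+2); lia.
- rewrite -muln2 (expnS 2 q.+2); lia.
- rewrite (_ : (2 ^ q.+3 - 2 * q.+2 - 2) * n + 2 = ((2 ^ q.+2 - q.+3) * n + 1).*2) ?odd_double //.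
  rewrite (expnS 2 q.+2) -muln2; nia.
- by rewrite addn2.
Qed.

End Main.

Theorem theorem4p8 (S : signature) (E : term S nat -> term S nat -> Prop) (n : nat) :
  has_gumm_terms E n ->
  (forall q, 1 <= q -> modular E (2 ^ q + 1) ((2 ^ q.+1 - 2) * n + 2)) /\
  (forall q, 2 <= q -> modular E (2 ^ q - 1) ((2 ^ q.+1 - 2 * q - 2) * n + 2)).
Proof.
move=> [p [j Hg]]; split.
- case=> [//|q] _ A HA al be ga Hal Hbe Hga x y [Hxy Hc].
  have [Hj [Hp1 [Hp2 [Hodd [Hev Hlast]]]]] := Hg A HA.
  apply/circ_seq; move/circ_seq: Hc => Hc.
  exact: (partI Hj Hp1 Hp2 Hodd Hev Hlast Hal Hbe Hga Hxy Hc).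
- case=> [|[|q]] // _ A HA al be ga Hal Hbe Hga x y [Hxy Hc].
  have [Hj [Hp1 [Hp2 [Hodd [Hev Hlast]]]]] := Hg A HA.
  apply/circ_seq; move/circ_seq: Hc => Hc.
  exact: (partII Hj Hp1 Hp2 Hodd Hev Hlast Hal Hbe Hga Hxy Hc).
Qed.
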